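(* Let $A(t)$, $t>1$, be a family of complex $2\times 2$ matrices with $\det(A(t))=1$ for all $t$, and suppose there are a real number $\alpha$ and a nonzero complex $2\times 2$ matrix $B$ such that $A(t)=t^\alpha B+o(t^\alpha)$ as $t\to\infty$ (i.e. $t^{-\alpha}A(t)\to B$). Then, as $t\to\infty$, $\tilde R_{(\log t)^{-1}}([A(t)]_{\mathbb{C}^*})$ converges in $PSL_2(\mathbb{C})$ to $[e^\alpha B+e^{-\alpha}(B^{\mathbf c})^*]_{\mathbb{C}^*}$.
   Context: For a complex $2\times 2$ matrix $B=\begin{pmatrix}a&b\\ c&d\end{pmatrix}$ write $B^{\mathbf c}=\begin{pmatrix}d&-b\\ -c&a\end{pmatrix}$ and let $B^*$ denote the conjugate transpose. $\mathbb{C}P^3$ is the projectivization of the space of complex $2\times 2$ matrices, $[B]_{\mathbb{C}^*}$ the class of a nonzero matrix, and $PSL_2(\mathbb{C})\subset\mathbb{C}P^3$ the set of classes with nonzero determinant. For $h>0$, the map $\tilde R_h\colon PSL_2(\mathbb{C})\to PSL_2(\mathbb{C})$ is defined as follows: choose a representative $A$ with $\det(A)=1$, write its polar decomposition $A=PU$ with $P$ positive definite Hermitian and $U$ unitary, and set $\tilde R_h([A]_{\mathbb{C}^*})=[P^hU]_{\mathbb{C}^*}$, where $P^h$ is the positive definite power of $P$. *)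

(* Defs.v *)
From HB Require Import structures.
From mathcomp Require Import all_boot all_order all_algebra.
From mathcomp Require Import all_classical all_reals all_analysis.
From mathcomp Require Import complex.
Set Implicit Arguments. Unset Strict Implicit. Unset Printing Implicit Defensive.
Import Order.TTheory GRing.Theory Num.Theory.
Import numFieldNormedType.Exports.
Local Open Scope classical_set_scope.
Local Open Scope ring_scope.

Section Defs.
Variable R : realType.
Local Notation C := (R[i]).
Local Notation M2 := ('M[C]_2).

Definition toC (x : R) : C := Complex x 0.

Definition cconj (z : C) : C := Complex (complex.Re z) (- complex.Im z).

Definition adjC (m n : nat) (B : 'M[C]_(m, n)) : 'M[C]_(n, m) :=
  \matrix_(i, j) cconj (B j i).

Definition cmx (B : M2) : M2 :=
  \matrix_(i < 2, j < 2)
    (if (i == 0) && (j == 0) then B 1 1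
     else if (i == 0) && (j == 1) then - B 0 1
     else if (i == 1) && (j == 0) then - B 1 0
     else B 0 0).

Definition unitary (U : M2) : Prop := U *m adjC U = 1%:M.

Definition pos_def_herm (P : M2) : Prop :=
  adjC P = P /\
  forall v : 'cV[C]_2, v != 0 ->
    let q := (adjC v *m P *m v) 0 0 in complex.Im q = 0 /\ 0 < complex.Re q.

Definition rdiag2 (l1 l2 : R) : M2 :=
  \matrix_(i < 2, j < 2)
    (if i == j then (if i == 0 then toC l1 else toC l2) else 0).

Definition is_mxpow (P : M2) (h : R) (Q : M2) : Prop :=
  exists (V : M2) (l1 l2 : R),
    [/\ unitary V, 0 < l1, 0 < l2,
        P = V *m rdiag2 l1 l2 *m adjC V &
        Q = V *m rdiag2 (l1 `^ h) (l2 `^ h) *m adjC V].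

Definition proj_eq (X Y : M2) : Prop :=
  X != 0 /\ exists c : C, c != 0 /\ Y = c *: X.

(* Rtilde h X Y : for h > 0,  Rtilde_h([X]) = [Y], where [X] is in PSL_2(C):
   choose A with [A] = [X], det A = 1, polar decomposition A = P U,
   and [Y] = [P^h U]. *)
Definition Rtilde (h : R) (X Y : M2) : Prop :=
  \det X != 0 /\
  exists A P U Q : M2,
    [/\ proj_eq X A, \det A = 1, pos_def_herm P, unitary U &
        [/\ A = P *m U, is_mxpow P h Q & proj_eq (Q *m U) Y]].

Definition ccvg (f : R -> C) (l : C) : Prop :=
  (complex.Re (f t) @[t --> +oo] --> complex.Re l) /\
  (complex.Im (f t) @[t --> +oo] --> complex.Im l).

Definition mx_cvg (F : R -> M2) (L : M2) : Prop :=
  forall i j : 'I_2, ccvg (fun t => F t i j) (L i j).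

(* convergence in CP^3 of [F t] to [L] (L nonzero): some nonzero rescalings
   of representatives converge to L (quotient topology of C^4\{0} -> CP^3). *)
Definition proj_cvg (F : R -> M2) (L : M2) : Prop :=
  L != 0 /\
  exists c : R -> C, (\forall t \near +oo, c t != 0) /\
                     mx_cvg (fun t => c t *: F t) L.
End Defs.

(* Main.v *)
Require Import Defs.
From HB Require Import structures.
From mathcomp Require Import all_boot all_order all_algebra.
From mathcomp Require Import all_classical all_reals all_analysis.
From mathcomp Require Import complex.
From mathcomp Require Import ring lra.
Import Order.TTheory GRing.Theory Num.Theory.
Import numFieldNormedType.Exports.
Local Open Scope classical_set_scope.
Local Open Scope ring_scope.
Set Implicit Arguments. Unset Strict Implicit. Unset Printing Implicit Defensive.

Section Helpers.
Variable R : realType.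
Local Notation C := (R[i]).
Local Notation M2 := ('M[C]_2).

Lemma ReD (x y : C) : complex.Re (x + y) = complex.Re x + complex.Re y.
Proof. by case: x; case: y. Qed.
Lemma ImD (x y : C) : complex.Im (x + y) = complex.Im x + complex.Im y.
Proof. by case: x; case: y. Qed.
Lemma ReN (x : C) : complex.Re (- x) = - complex.Re x.
Proof. by case: x. Qed.
Lemma ImN (x : C) : complex.Im (- x) = - complex.Im x.
Proof. by case: x. Qed.
Lemma ReB (x y : C) : complex.Re (x - y) = complex.Re x - complex.Re y.
Proof. by rewrite ReD ReN. Qed.
Lemma ImB (x y : C) : complex.Im (x - y) = complex.Im x - complex.Im y.
Proof. by rewrite ImD ImN. Qed.
Lemma ReM (x y : C) : complex.Re (x * y) = complex.Re x * complex.Re y - complex.Im x * complex.Im y.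
Proof. by case: x => a b; case: y => c d. Qed.
Lemma ImM (x y : C) : complex.Im (x * y) = complex.Re x * complex.Im y + complex.Im x * complex.Re y.
Proof. by case: x => a b; case: y => c d /=; ring. Qed.
Lemma Re0 : complex.Re (0 : C) = 0. Proof. by []. Qed.
Lemma Im0 : complex.Im (0 : C) = 0. Proof. by []. Qed.
Lemma Re1 : complex.Re (1 : C) = 1. Proof. by []. Qed.
Lemma Im1 : complex.Im (1 : C) = 0. Proof. by []. Qed.
Lemma RetoC (x : R) : complex.Re (toC x) = x. Proof. by []. Qed.
Lemma ImtoC (x : R) : complex.Im (toC x) = 0. Proof. by []. Qed.
Lemma Recc (z : C) : complex.Re (cconj z) = complex.Re z. Proof. by []. Qed.
Lemma Imcc (z : C) : complex.Im (cconj z) = - complex.Im z. Proof. by []. Qed.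
Lemma cconjE (z : C) : cconj z = (z^*)%C. Proof. by case: z. Qed.
Lemma toCE (x : R) : toC x = (x%:C)%C. Proof. by []. Qed.
Lemma ceqP (x y : C) : complex.Re x = complex.Re y -> complex.Im x = complex.Im y -> x = y.
Proof. by case: x => a b; case: y => c d /= -> ->. Qed.

Definition reimE := (ReD, ImD, ReN, ImN, ReM, ImM, Re0, Im0, Re1, Im1, RetoC, ImtoC, Recc, Imcc).

Lemma mx2P (X Y : M2) : X 0 0 = Y 0 0 -> X 0 1 = Y 0 1 -> X 1 0 = Y 1 0 -> X 1 1 = Y 1 1 -> X = Y.
Proof.
move=> h00 h01 h10 h11; apply/matrixP => i j.
case: i => [[|[|//]] Hi]; case: j => [[|[|//]] Hj].
- have -> : Ordinal Hi = 0 by apply: val_inj.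
  have -> : Ordinal Hj = 0 by apply: val_inj.
  done.
- have -> : Ordinal Hi = 0 by apply: val_inj.
  have -> : Ordinal Hj = 1 by apply: val_inj.
  done.
- have -> : Ordinal Hi = 1 by apply: val_inj.
  have -> : Ordinal Hj = 0 by apply: val_inj.
  done.
- have -> : Ordinal Hi = 1 by apply: val_inj.
  have -> : Ordinal Hj = 1 by apply: val_inj.
  done.
Qed.

Lemma mul2E (X Y : M2) i j : (X *m Y) i j = X i 0 * Y 0 j + X i 1 * Y 1 j.
Proof. rewrite mxE !big_ord_recl big_ord0 addr0. 
have E0 : (lift ord0 ord0 : 'I_2) = 1 by apply: val_inj.
by rewrite E0. Qed.

Lemma det2E (X : M2) : \det X = X 0 0 * X 1 1 - X 0 1 * X 1 0.
Proof.
rewrite (expand_det_row _ 0) !big_ord_recl big_ord0 addr0 /cofactor !det_mx11.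
rewrite !mxE /=.
have E0 : (lift ord0 ord0 : 'I_2) = 1 by apply: val_inj.
have E0' : (lift 0 0 : 'I_2) = 1 by apply: val_inj.
have E1 : (lift (1 : 'I_2) (0 : 'I_1)) = 0 by apply: val_inj.
rewrite E0 ?E0' E1 /bump /= expr0 expr1 mul1r mulN1r.
have -> : (ord0 : 'I_2) = 0 by [].
ring.
Qed.


Lemma id2E (i j : 'I_2) : (1%:M : M2) i j = (i == j)%:R.
Proof. by rewrite mxE. Qed.

Lemma adjCE (m n : nat) (X : 'M[C]_(m, n)) i j : adjC X i j = cconj (X j i).
Proof. by rewrite mxE. Qed.

Lemma adjC_mul (X Y : M2) : adjC (X *m Y) = adjC Y *m adjC X.
Proof.
by apply: mx2P; rewrite !adjCE !mul2E !adjCE !cconjE rmorphD !rmorphM /= mulrC [_ * _^*%C]mulrC.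
Qed.

Lemma adjC1 : adjC (1%:M : M2) = 1%:M.
Proof. by apply: mx2P; rewrite !mxE /= ?cconjE ?conjc0 ?conjc1. Qed.

Lemma adjCK (X : M2) : adjC (adjC X) = X.
Proof. by apply: mx2P; rewrite !mxE !cconjE conjcK. Qed.

Lemma adjCD (X Y : M2) : adjC (X + Y) = adjC X + adjC Y.
Proof. by apply: mx2P; rewrite !mxE !cconjE rmorphD. Qed.

Lemma adjCZ (c : C) (X : M2) : adjC (c *: X) = cconj c *: adjC X.
Proof. by apply: mx2P; rewrite !mxE !cconjE rmorphM. Qed.

Lemma cmxZ (c : C) (X : M2) : cmx (c *: X) = c *: cmx X.
Proof. by apply: mx2P; rewrite !mxE /= ?mulrN. Qed.

Lemma mul_cmx (X : M2) : X *m cmx X = (\det X)%:M.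
Proof. by apply: mx2P; rewrite !mul2E !mxE /= det2E ?mulr1n ?mulr0n; ring. Qed.

Lemma det_adjC (X : M2) : \det (adjC X) = cconj (\det X).
Proof. by rewrite !det2E !adjCE !cconjE rmorphB !rmorphM /= [(X 1 0)^*%C * _]mulrC. Qed.

End Helpers.

Section Alg.
Variable R : realType.
Local Notation C := (R[i]).
Local Notation M2 := ('M[C]_2).

Definition frob (X : M2) : R :=
  complex.Re (X 0 0) ^+ 2 + complex.Im (X 0 0) ^+ 2 +
  complex.Re (X 0 1) ^+ 2 + complex.Im (X 0 1) ^+ 2 +
  complex.Re (X 1 0) ^+ 2 + complex.Im (X 1 0) ^+ 2 +
  complex.Re (X 1 1) ^+ 2 + complex.Im (X 1 1) ^+ 2.

Lemma tr2E (X : M2) : \tr X = X 0 0 + X 1 1.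
Proof.
rewrite /mxtrace !big_ord_recl big_ord0 addr0.
have E0 : (lift ord0 ord0 : 'I_2) = 1 by apply: val_inj.
by rewrite E0.
Qed.

Lemma trXX (X : M2) : \tr (X *m adjC X) = toC (frob X).
Proof.
rewrite tr2E !mul2E !adjCE; apply: ceqP; rewrite !reimE /frob; ring.
Qed.

Lemma rdiag_lin (k r l1 l2 a b : R) :
  a = k * (l1 + r * l2) -> b = k * (l2 + r * l1) ->
  toC k *: (rdiag2 l1 l2 + toC r *: rdiag2 l2 l1) = rdiag2 a b.
Proof.
move=> -> ->; apply: mx2P; rewrite !mxE /=; apply: ceqP; rewrite !reimE; ring.
Qed.

Lemma rdiag_mul (a b c d : R) : rdiag2 a b *m rdiag2 c d = rdiag2 (a * c) (b * d).
Proof. apply: mx2P; rewrite !mul2E !mxE /=; apply: ceqP; rewrite !reimE; ring. Qed.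

Lemma rdiag1 : rdiag2 1 1 = 1%:M :> M2.
Proof. by apply: mx2P; rewrite !mxE. Qed.

Lemma det_rdiag (a b : R) : \det (rdiag2 a b) = toC (a * b).
Proof. rewrite det2E !mxE /=; apply: ceqP; rewrite !reimE; ring. Qed.

Lemma tr_rdiag (a b : R) : \tr (rdiag2 a b) = toC (a + b).
Proof. rewrite tr2E !mxE /=; apply: ceqP; rewrite !reimE; ring. Qed.

Lemma adjC_rdiag (a b : R) : adjC (rdiag2 a b) = rdiag2 a b.
Proof. apply: mx2P; rewrite !adjCE !mxE /=; apply: ceqP; rewrite !reimE; ring. Qed.

End Alg.

Section Alg2.
Variable R : realType.
Local Notation C := (R[i]).
Local Notation M2 := ('M[C]_2).

Lemma alg_main (h : R) (X Y : M2) : \det X = 1 -> Rtilde h X Y ->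
  exists (c : C) (l1 l2 : R),
    c != 0 /\ [/\ 0 < l1, 0 < l2, l1 * l2 = 1, frob X = l1 ^+ 2 + l2 ^+ 2 &
      forall k r : R, l1 `^ h = k * (l1 + r * l2) -> l2 `^ h = k * (l2 + r * l1) ->
        Y = (c * toC k) *: (X + toC r *: adjC (cmx X))].
Proof.
move=> dX [_ [A' [P [U [Q [[_ [c0 [c0n0 eA']]] dA' [hP _] uU [eAPU [V [l1 [l2 [uV l1p l2p eP eQ]]]] [_ [c1 [c1n0 eY]]]]]]]]]].
have c02 : c0 * c0 = 1.
  by move: dA'; rewrite eA' detZ dX mulr1 expr2.
have cc0 : cconj c0 = c0.
  have : (c0 ^+ 2 == 1) by rewrite expr2 c02.
  by rewrite sqrf_eq1 => /orP [] /eqP ->; apply: ceqP; rewrite !reimE //= ?oppr0.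
have uV' : adjC V *m V = 1%:M by apply: mulmx1C.
have uU' : adjC U *m U = 1%:M by apply: mulmx1C.
have l12 : l1 * l2 = 1.
  have dVV : \det V * \det (adjC V) = 1 by rewrite -det_mulmx uV det1.
  have dUU : \det U * cconj (\det U) = 1 by rewrite -det_adjC -det_mulmx uU det1.
  have dP : \det P = toC (l1 * l2).
    by rewrite eP !det_mulmx det_rdiag mulrC mulrA [\det (adjC V) * _]mulrC dVV mul1r.
  have : toC (l1 * l2) * \det U = 1 by rewrite -dP -det_mulmx -eAPU.
  have hp : 0 < l1 * l2 by apply: mulr_gt0.
  move: dUU; set z := \det U; move: hp; move: (l1 * l2) => p hp.
  case: z => a b /= e1 e2.
  have := f_equal (@complex.Re R) e1; have := f_equal (@complex.Im R) e1.
  have := f_equal (@complex.Re R) e2; have := f_equal (@complex.Im R) e2.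
  rewrite /= ?mul0r ?mulr0 ?subr0 ?addr0 ?add0r.
  move=> *; nra.
rewrite /unitary in uV uU.
have DDi : rdiag2 l1 l2 *m rdiag2 l2 l1 = 1%:M :> M2.
  by rewrite rdiag_mul l12 mulrC l12 rdiag1.
set D := rdiag2 l1 l2 in eP DDi *; set Di := rdiag2 l2 l1 in DDi *.
set Pi := V *m Di *m adjC V.
have PPi : P *m Pi = 1%:M.
  rewrite eP /Pi !mulmxA -[V *m D *m adjC V *m V]mulmxA uV' mulmx1.
  by rewrite -[V *m D *m Di]mulmxA DDi mulmx1 uV.
have adjA' : adjC A' = adjC U *m P by rewrite eAPU adjC_mul hP.
have cA : adjC (cmx A') = Pi *m U.
  have h1 : adjC (cmx A') *m adjC A' = 1%:M by rewrite -adjC_mul mul_cmx dA' adjC1.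
  have h2 : adjC A' *m (Pi *m U) = 1%:M.
    by rewrite adjA' -mulmxA (mulmxA P) PPi mul1mx uU'.
  by rewrite -[adjC (cmx A')]mulmx1 -h2 mulmxA h1 mul1mx.
have eX : X = c0 *: A' by rewrite eA' scalerA c02 scale1r.
have cX : adjC (cmx X) = c0 *: (Pi *m U) by rewrite eX cmxZ adjCZ cc0 cA.
have fr : frob X = l1 ^+ 2 + l2 ^+ 2.
  have : \tr (X *m adjC X) = toC (l1 ^+ 2 + l2 ^+ 2).
    rewrite eX adjCZ cc0 -scalemxAl -scalemxAr scalerA c02 scale1r.
    rewrite eAPU adjC_mul hP -mulmxA (mulmxA U) uU mul1mx eP.
    rewrite !mulmxA -[V *m D *m adjC V *m V]mulmxA uV' mulmx1.
    rewrite mxtrace_mulC !mulmxA uV' mul1mx /D rdiag_mul tr_rdiag.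
    by rewrite !expr2.
  by rewrite trXX => /(f_equal (@complex.Re R)).
exists (c1 * c0), l1, l2; split; first by rewrite mulf_neq0.
split => // k r ha hb.
have eXX : X + toC r *: adjC (cmx X) = c0 *: ((V *m (D + toC r *: Di) *m adjC V) *m U).
  rewrite cX {1}eX eAPU eP /Pi.
  rewrite mulmxDr !mulmxDl -scalemxAr -!scalemxAl.
  by rewrite scalerDr !scalerA mulrC.
rewrite eXX eY eQ scalerA.
rewrite -(rdiag_lin ha hb) -scalemxAr -!scalemxAl scalerA.
congr (_ *: _).
have -> : c1 * c0 * toC k * c0 = c1 * toC k * (c0 * c0) by ring.
by rewrite c02 mulr1.
Qed.

End Alg2.

Section Real.
Variable R : realType.

Lemma exp_diff_le (p d : R) : 0 <= p -> 0 <= d ->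
  0 <= expR (- p) - expR (- (p + d)) <= d.
Proof.
move=> hp hd.
have e1 : expR (- (p + d)) = expR (- p) * expR (- d) by rewrite opprD expRD.
have h1 := expR_ge1Dx (- d).
have h2 : expR (- p) <= 1 by rewrite expR_le1 oppr_le0.
have h3 := expR_gt0 (- p).
have h4 : expR (- d) <= 1 by rewrite expR_le1 oppr_le0.
rewrite e1; apply/andP; split. nra. nra.
Qed.

Lemma real_coef_m (m h : R) : 0 < h ->
  exists k r : R, [/\ k != 0, expR (h * m) = k * (expR m + r * expR (- m)),
    expR (h * (- m)) = k * (expR (- m) + r * expR m) &
    `|r - expR (- (h * ln (expR m ^+ 2 + expR (- m) ^+ 2)))| <= 3 * h].
Proof.
wlog hm : m / 0 <= m.
  move=> H hh; case: (lerP 0 m) => [hm|hm]; first exact: H.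
  have hm' : 0 <= - m by rewrite oppr_ge0 ltW.
  have [k [r [kn0 e1 e2 e3]]] := H (- m) hm' hh.
  rewrite !opprK in e1 e2 e3.
  by exists k, r; split; [exact: kn0 | exact: e2 | exact: e1 | by rewrite [expR m ^+ 2 + _]addrC].
move=> hh.
set E := expR m; set Ei := expR (- m).
have EEi : E * Ei = 1 by rewrite /E /Ei -expRD subrr expR0.
have Ep : 0 < E := expR_gt0 m.
have Eip : 0 < Ei := expR_gt0 (- m).
have lnE : ln (E ^+ 2 + Ei ^+ 2) = 2 * m + ln (1 + Ei ^+ 4).
  have -> : E ^+ 2 + Ei ^+ 2 = E ^+ 2 * (1 + Ei ^+ 4).
    have -> : Ei ^+ 4 = Ei ^+ 2 * Ei ^+ 2 by rewrite -exprD.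
    rewrite mulrDr mulr1 mulrA -exprMn EEi expr1n mul1r //.
  rewrite lnM ?posrE ?exprn_gt0 ?addr_gt0 ?exprn_gt0 //.
  by rewrite lnXn // /E expRK mulr_natl.
set d := ln (1 + Ei ^+ 4).
have d0 : 0 <= d by rewrite ln_ge0 // lerDl exprn_ge0 // ltW.
have Ei1 : Ei <= 1 by rewrite expR_le1 oppr_le0.
have d1 : d <= 1.
  apply: (le_trans (le_ln1Dx _)); first by rewrite (lt_le_trans (y := 0)) ?exprn_ge0 ?ltW // ltrN10.
  by rewrite exprn_ile1 // ltW.
have U : `|expR (- (2 * h * m)) - expR (- (h * ln (E ^+ 2 + Ei ^+ 2)))| <= h.
  rewrite lnE mulrDr mulrA (_ : 2 * h * m = h * 2 * m); last by ring.
  have hp : 0 <= h * 2 * m by rewrite !mulr_ge0 // ltW.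
  have hd : 0 <= h * d by rewrite mulr_ge0 // ltW.
  have /andP [H1 H2] := exp_diff_le hp hd.
  rewrite ger0_norm //; nra.
have ub : expR (- (2 * h * m)) = expR (h * - m) ^+ 2.
  by rewrite -expRM_natl; congr expR; ring.
rewrite ub in U.
case: (ltrP 0 m) => [mp|m0]; last first.
  have m00 : m = 0 by apply/eqP; rewrite eq_le m0 hm.
  move: U; rewrite /E /Ei !m00 !mulr0 oppr0 expR0 => U.
  exists (1/2), 1; split.
  - by apply/eqP => H0; lra.
  - by field.
  - by rewrite mulr0 expR0; field.
  - move: U; rewrite ?mulr0 ?oppr0 ?expR0 ?expr1n => U; rewrite ?expr1n; lra.
set a := expR (h * m); set b := expR (h * - m).
have ab : b = a^-1 by rewrite /b /a mulrN expRN.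
have EiE : Ei = E^-1 by rewrite /Ei expRN.
have ap : 0 < a := expR_gt0 _.
have a1 : 1 <= a by rewrite /a -expR0 ler_expR mulr_ge0 // ltW.
have E1 : 1 < E by rewrite /E expR_gt1.
have f1 : 1 - b ^+ 4 <= 4 * h * m.
  have -> : b ^+ 4 = expR (- (4 * h * m)).
    by rewrite /b -expRM_natl; congr expR; ring.
  have := expR_ge1Dx (- (4 * h * m)); lra.
have f2 : 1 + 2 * m <= E ^+ 2.
  by rewrite /E -expRM_natl; apply: expR_ge1Dx.
have f3 : b ^+ 2 <= 1.
  by rewrite /b -expRM_natl expR_le1 mulr_ge0_le0 // mulrN oppr_le0 mulr_ge0 // ltW.
have f4 : 0 <= b := expR_ge0 _.
have key : 1 - b ^+ 4 <= 2 * h * (E ^+ 2 - b ^+ 2) by nra.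
have key2 : a ^+ 2 - b ^+ 2 <= 2 * h * (a ^+ 2 * E ^+ 2 - 1).
  have := ler_wpM2l (exprn_ge0 2 (ltW ap)) key.
  have -> : a ^+ 2 * (1 - b ^+ 4) = a ^+ 2 - b ^+ 2.
    by rewrite ab; field; rewrite gt_eqF.
  have -> : a ^+ 2 * (2 * h * (E ^+ 2 - b ^+ 2)) = 2 * h * (a ^+ 2 * E ^+ 2 - 1).
    by rewrite ab; field; rewrite gt_eqF.
  done.
have aE1 : 1 < a * E by nra.
have den1 : 0 < a * E - b * Ei.
  rewrite ab EiE subr_gt0 -invfM.
  apply: (lt_trans _ aE1); rewrite invf_lt1 //; lra.
have den2 : 0 < E ^+ 2 - Ei ^+ 2.
  have Ei1' : Ei < 1 by nra.
  nra.
have den3 : 0 < a ^+ 2 * E ^+ 2 - 1.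
  rewrite -exprMn subr_gt0 expr2; nra.
exists ((a * E - b * Ei) / (E ^+ 2 - Ei ^+ 2)), ((b * E - a * Ei) / (a * E - b * Ei)).
have nz : forall P : bool, P -> P by [].
split.
- apply: mulf_neq0; first by rewrite gt_eqF.
  by rewrite invr_eq0 gt_eqF.
- rewrite ab EiE; field; rewrite -?exprMn; repeat (apply/andP; split); apply/eqP => H0; nra.
- rewrite ab EiE; field; rewrite -?exprMn; repeat (apply/andP; split); apply/eqP => H0; nra.
have rr : (b * E - a * Ei) / (a * E - b * Ei) - b ^+ 2 = - ((a ^+ 2 - b ^+ 2) / (a ^+ 2 * E ^+ 2 - 1)).
  rewrite ab EiE; field.
  rewrite -?exprMn; repeat (apply/andP; split); apply/eqP => H0; nra.
have nn : 0 <= a ^+ 2 - b ^+ 2 by nra.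
have r2 : `|(b * E - a * Ei) / (a * E - b * Ei) - b ^+ 2| <= 2 * h.
  rewrite rr normrN ger0_norm; last by apply: divr_ge0 => //; exact: ltW.
  by rewrite ler_pdivrMr.
rewrite -/b in U.
apply: (le_trans (ler_distD (b ^+ 2) _ _)); lra.
Qed.

End Real.

Section Step.
Variable R : realType.
Local Notation C := (R[i]).
Local Notation M2 := ('M[C]_2).

Lemma toC_neq0 (k : R) : k != 0 -> toC k != 0.
Proof. by move=> kn0; apply/eqP => /(f_equal (@complex.Re R)) /= k0; move/eqP: kn0. Qed.

Lemma step (h : R) (X Y : M2) : 0 < h -> \det X = 1 -> Rtilde h X Y ->
  exists (c : C) (r : R), [/\ c != 0, Y = c *: (X + toC r *: adjC (cmx X)) &
    `|r - expR (- (h * ln (frob X)))| <= 3 * h].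
Proof.
move=> hp dX Hr.
have [c [l1 [l2 [cn0 [l1p l2p l12 fr He]]]]] := alg_main dX Hr.
set m := ln l1.
have e1 : l1 = expR m by rewrite /m lnK // posrE.
have e2 : l2 = expR (- m).
  rewrite expRN -e1; apply: (mulfI (lt0r_neq0 l1p)).
  by rewrite l12 mulfV // lt0r_neq0.
have [k [r [kn0 ek1 ek2 er]]] := real_coef_m m hp.
exists (c * toC k), r; split.
- by rewrite mulf_neq0 // toC_neq0.
- apply: He.
  + by rewrite /powR gt_eqF // -/m ek1 -e1 -e2.
  + by rewrite /powR gt_eqF // {1}e2 expRK ek2 -e1 -e2.
- by rewrite fr e1 e2.
Qed.

End Step.

Section Ana.
Variable R : realType.

Lemma inv_ln0 : (ln t)^-1 @[t --> +oo] --> (0 : R).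
Proof.
apply/cvgrPdist_lt => e e0.
near=> t.
have tb : expR (e^-1) < t by near: t; apply: nbhs_pinfty_gt; rewrite num_real.
have t0 : 0 < t := lt_trans (expR_gt0 _) tb.
have lt : e^-1 < ln t by rewrite -ltr_expR lnK ?posrE.
have ie : 0 < e^-1 by rewrite invr_gt0.
have l0 := lt_trans ie lt.
rewrite sub0r normrN ger0_norm ?invr_ge0 ?ltW //.
by rewrite -(invrK e) ltf_pV2 ?posrE ?invr_gt0.
Unshelve. all: by end_near.
Qed.

End Ana.

Section Ana2.
Variable R : realType.
Local Notation C := (R[i]).
Local Notation M2 := ('M[C]_2).

Lemma rcvgD (f g : R -> R) (a b : R) : f t @[t --> +oo] --> a -> g t @[t --> +oo] --> b ->
  (f t + g t) @[t --> +oo] --> a + b.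
Proof. by move=> ha hb; apply: cvgD. Qed.

Lemma rcvgM (f g : R -> R) (a b : R) : f t @[t --> +oo] --> a -> g t @[t --> +oo] --> b ->
  (f t * g t) @[t --> +oo] --> a * b.
Proof. by move=> ha hb; apply: cvgM. Qed.

Lemma rcvgN (f : R -> R) (a : R) : f t @[t --> +oo] --> a -> (- f t) @[t --> +oo] --> - a.
Proof. by move=> ha; apply: cvgN. Qed.

Lemma rcvgC (a : R) : (fun _ : R => a) @ +oo --> a.
Proof. exact: cvg_cst. Qed.

Lemma ccvg_comb (F G : R -> M2) (L N : M2) (a b : R -> R) (a0 b0 : R) i j :
  ccvg (fun t => F t i j) (L i j) -> ccvg (fun t => G t i j) (N i j) ->
  a t @[t --> +oo] --> a0 -> b t @[t --> +oo] --> b0 ->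
  ccvg (fun t => (toC (a t) *: F t + toC (b t) *: G t) i j) ((toC a0 *: L + toC b0 *: N) i j).
Proof.
move=> [hF1 hF2] [hG1 hG2] ha hb; split.
- rewrite !mxE !reimE !mul0r !subr0.
  under eq_fun do rewrite !mxE !reimE !mul0r !subr0.
  by apply: rcvgD; apply: rcvgM.
- rewrite !mxE !reimE !mul0r !addr0.
  under eq_fun do rewrite !mxE !reimE !mul0r !addr0.
  by apply: rcvgD; apply: rcvgM.
Qed.


Lemma ord2_cases (i : 'I_2) : i = 0 \/ i = 1.
Proof.
case: i => [[|[|//]] Hi]; [left | right]; exact: val_inj.
Qed.

Lemma ccvg_cc (f : R -> C) l : ccvg f l -> ccvg (fun t => cconj (f t)) (cconj l).
Proof. move=> [h1 h2]; split => /=; [exact: h1 | exact: rcvgN]. Qed.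

Lemma ccvg_N (f : R -> C) l : ccvg f l -> ccvg (fun t => - f t) (- l).
Proof.
move=> [h1 h2]; split; rewrite ?ReN ?ImN; under eq_fun do rewrite ?ReN ?ImN; exact: rcvgN.
Qed.

Lemma ccvg_ext (f g : R -> C) l : (forall t, f t = g t) -> ccvg g l -> ccvg f l.
Proof. by move=> e; rewrite (_ : f = g) //; apply: funext. Qed.

Arguments cconj : simpl never.

Lemma mx_cvg_adj (F : R -> M2) L : mx_cvg F L -> mx_cvg (fun t => adjC (cmx (F t))) (adjC (cmx L)).
Proof.
move=> h i j.
have [->|->] := ord2_cases i; have [->|->] := ord2_cases j;
  (apply: ccvg_ext; first by move=> t; rewrite !adjCE !mxE /=);
  rewrite !adjCE !mxE /=; apply: ccvg_cc => //; try apply: ccvg_N => //; exact: h.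
Qed.

Lemma mx_cvg_near (F G : R -> M2) L : (\forall t \near +oo, F t = G t) -> mx_cvg G L -> mx_cvg F L.
Proof.
move=> e hG i j; have [h1 h2] := hG i j; split.
- apply: (cvg_trans _ h1); apply: near_eq_cvg; apply: filterS e => t -> //.
- apply: (cvg_trans _ h2); apply: near_eq_cvg; apply: filterS e => t -> //.
Qed.

Lemma frob_cvg (F : R -> M2) L : mx_cvg F L -> frob (F t) @[t --> +oo] --> frob L.
Proof.
move=> h.
have sq : forall (f : R -> R) (a : R), f t @[t --> +oo] --> a -> (f t ^+ 2) @[t --> +oo] --> a ^+ 2.
  by move=> f a ha; rewrite expr2; under eq_fun do rewrite expr2; apply: rcvgM.
rewrite /frob; repeat apply: rcvgD; apply: sq; first [exact: (h _ _).1 | exact: (h _ _).2].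
Qed.

Lemma det_cvg (F : R -> M2) L : mx_cvg F L -> ccvg (fun t => \det (F t)) (\det L).
Proof.
move=> h; split; rewrite det2E !reimE; under eq_fun do rewrite det2E !reimE;
  repeat first [apply: rcvgD | apply: rcvgN | apply: rcvgM];
  first [exact: (h _ _).1 | exact: (h _ _).2].
Qed.

Lemma frobZ (x : R) (X : M2) : frob (toC x *: X) = x ^+ 2 * frob X.
Proof. rewrite /frob !mxE !reimE; ring. Qed.

Lemma frob_ge0 (X : M2) : 0 <= frob X.
Proof. by rewrite /frob !addr_ge0 ?sqr_ge0. Qed.

Lemma frob_gt0 (X : M2) : X != 0 -> 0 < frob X.
Proof.
move=> Xn0; rewrite lt_neqAle frob_ge0 andbT; apply/eqP => f0.
move/eqP: Xn0; apply.
have z : forall c : R, c ^+ 2 <= 0 -> c = 0.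
  by move=> c hc; apply/eqP; rewrite -sqrf_eq0 eq_le hc sqr_ge0.
move: f0; rewrite /frob => f0.
have := sqr_ge0 (complex.Re (X 0 0)); have := sqr_ge0 (complex.Im (X 0 0)).
have := sqr_ge0 (complex.Re (X 0 1)); have := sqr_ge0 (complex.Im (X 0 1)).
have := sqr_ge0 (complex.Re (X 1 0)); have := sqr_ge0 (complex.Im (X 1 0)).
have := sqr_ge0 (complex.Re (X 1 1)); have := sqr_ge0 (complex.Im (X 1 1)).
move=> *.
apply: mx2P; rewrite !mxE; apply: ceqP; rewrite ?Re0 ?Im0; apply: z; lra.
Qed.

End Ana2.

Unset Implicit Arguments.

Theorem lemma3p1 (R : realType) (A : R -> 'M[R[i]]_2) (alpha : R)
    (B : 'M[R[i]]_2) :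
  (forall t : R, 1 < t -> \det (A t) = 1) ->
  B != 0 ->
  mx_cvg (fun t => toC (t `^ (- alpha)) *: A t) B ->
  forall Y : R -> 'M[R[i]]_2,
    (forall t : R, 1 < t -> Rtilde (ln t)^-1 (A t) (Y t)) ->
    let L := toC (expR alpha) *: B + toC (expR (- alpha)) *: adjC (cmx B) in
    \det L != 0 /\ proj_cvg Y L.
Proof.
move=> HA HB Hc Y HY L.
set s := fun t : R => t `^ (- alpha).
set M := fun t => toC (s t) *: A t.
have fB := frob_gt0 HB.
have dM : forall t, 1 < t -> \det (M t) = toC (s t ^+ 2).
  move=> t t1; rewrite /M detZ HA // mulr1.
  by rewrite !expr2; apply: ceqP; rewrite !reimE; ring.
have [dRe dIm] := det_cvg Hc.
have near1 : \forall t \near +oo, 1 < (t : R).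
  by apply: nbhs_pinfty_gt; rewrite num_real.
have dB0 : 0 <= complex.Re (\det B).
  apply: (closed_cvg [set x : R | 0 <= x] (@closed_ge R 0) _ _ dRe).
  by apply: filterS near1 => t t1 /=; rewrite dM // RetoC sqr_ge0.
have dB1 : complex.Im (\det B) = 0.
  apply/eqP; rewrite eq_le; apply/andP; split.
  - apply: (closed_cvg [set x : R | x <= 0] (@closed_le R 0) _ _ dIm).
    by apply: filterS near1 => t t1 /=; rewrite dM // ImtoC.
  - apply: (closed_cvg [set x : R | 0 <= x] (@closed_ge R 0) _ _ dIm).
    by apply: filterS near1 => t t1 /=; rewrite dM // ImtoC.
have detL : complex.Re (\det L) = (expR alpha ^+ 2 + expR (- alpha) ^+ 2) * complex.Re (\det B)
     + expR alpha * expR (- alpha) * frob B.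
  rewrite /L !det2E !mxE /= !reimE /frob; ring.
have EE : expR alpha * expR (- alpha) = 1 by rewrite -expRD subrr expR0.
have detL0 : \det L != 0.
  apply/eqP => /(f_equal (@complex.Re R)); rewrite detL EE Re0 => H.
  have : 0 <= (expR alpha ^+ 2 + expR (- alpha) ^+ 2) * complex.Re (\det B).
    by rewrite mulr_ge0 // addr_ge0 // sqr_ge0.
  lra.
split => //.
split; first by apply/eqP => L0; move: detL0; rewrite L0 det0 eqxx.
have HC : forall t : R, exists p : R[i] * R, 1 < t ->
   [/\ p.1 != 0, Y t = p.1 *: (A t + toC p.2 *: adjC (cmx (A t))) &
    `|p.2 - expR (- ((ln t)^-1 * ln (frob (A t))))| <= 3 * (ln t)^-1].
  move=> t; case: (ltrP 1 t) => t1; last first.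
    by exists (0, 0).
  have hp : 0 < (ln t)^-1 by rewrite invr_gt0 ln_gt0.
  have [c [r H]] := step hp (HA t t1) (HY t t1).
  by exists (c, r).
have [p Hp] := choice HC.
set c := fun t => (p t).1; set r := fun t => (p t).2.
have fM : frob (M t) @[t --> +oo] --> frob B := frob_cvg Hc.
have near2 : \forall t \near +oo, 0 < frob (M t) := cvgr_gt _ fM 0 fB.
have hg : ((ln t)^-1 * ln (frob (A t))) @[t --> +oo] --> 2 * alpha.
  have e : \forall t \near +oo, 2 * alpha + (ln t)^-1 * ln (frob (M t)) = (ln t)^-1 * ln (frob (A t)).
    near=> t.
    have t1 : 1 < t by near: t; exact: near1.
    have f0 : 0 < frob (M t) by near: t; exact: near2.
    have t0 : 0 < t by apply: lt_trans t1.
    have s0 : 0 < s t by apply: powR_gt0.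
    have lt0 : 0 < ln t by apply: ln_gt0.
    have fr : frob (M t) = s t ^+ 2 * frob (A t) by rewrite /M frobZ.
    have fA : 0 < frob (A t) by move: f0; rewrite fr pmulr_rgt0 // exprn_gt0.
    rewrite fr lnM ?posrE ?exprn_gt0 // lnXn // /s ln_powR.
    by field; rewrite gt_eqF.
  have h1 : (2 * alpha + (ln t)^-1 * ln (frob (M t))) @[t --> +oo] --> 2 * alpha + 0 * ln (frob B).
    apply: rcvgD; first exact: rcvgC.
    apply: rcvgM; first exact: inv_ln0.
    apply: cvg_comp; [exact: fM | exact: continuous_ln].
  rewrite mul0r addr0 in h1.
  exact: (cvg_trans (near_eq_cvg e) h1).
have he : expR (- ((ln t)^-1 * ln (frob (A t)))) @[t --> +oo] --> expR (- (2 * alpha)).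
  apply: cvg_comp; [exact: rcvgN hg | exact: continuous_expR].
have hr : r t @[t --> +oo] --> expR (- (2 * alpha)).
  set e := fun t => expR (- ((ln t)^-1 * ln (frob (A t)))).
  have hd : (r t - e t) @[t --> +oo] --> 0.
    apply: (squeeze_cvgr (f := fun t => - (3 * (ln t)^-1)) (h := fun t => 3 * (ln t)^-1)).
    - apply: filterS near1 => t t1.
      have [_ _ hb] := Hp t t1.
      by rewrite -ler_norml.
    - rewrite -oppr0 -(mulr0 3); apply: rcvgN; apply: rcvgM; [exact: rcvgC | exact: inv_ln0].
    - rewrite -(mulr0 3); apply: rcvgM; [exact: rcvgC | exact: inv_ln0].
  rewrite -[X in _ --> X]add0r.
  have -> : r = fun t => (r t - e t) + e t by apply: funext => t; rewrite subrK.
  exact: rcvgD.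
have toCM : forall x y : R, toC (x * y) = toC x * toC y.
  by move=> x y; apply: ceqP; rewrite !reimE; ring.
have ccR : forall x : R, cconj (toC x) = toC x.
  by move=> x; apply: ceqP; rewrite !reimE ?oppr0.
exists (fun t => toC (expR alpha * s t) / c t); split.
  near=> t.
  have t1 : 1 < t by near: t; exact: near1.
  have [cn0 _ _] := Hp t t1.
  have s0 : 0 < s t by apply: powR_gt0; apply: lt_trans t1.
  apply: mulf_neq0; last by rewrite invr_eq0.
  by apply: toC_neq0; rewrite gt_eqF // mulr_gt0 // expR_gt0.
apply: (mx_cvg_near (G := fun t => toC (expR alpha) *: M t + toC (expR alpha * r t) *: adjC (cmx (M t)))).
  near=> t.
  have t1 : 1 < t by near: t; exact: near1.
  have [cn0 eY _] := Hp t t1.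
  rewrite eY /M cmxZ adjCZ ccR !scalerDr !scalerA.
  rewrite divfK // -!toCM.
  congr (_ *: _ + _ *: _); congr toC; rewrite /r; ring.
rewrite /L (_ : expR (- alpha) = expR alpha * expR (- (2 * alpha))); last first.
  by rewrite -expRD; congr expR; ring.
move=> i j; apply: ccvg_comb; [exact: Hc | exact: (mx_cvg_adj Hc i j) | exact: rcvgC | ].
by apply: rcvgM; [exact: rcvgC | exact: hr].
Unshelve. all: by end_near.
Qed.
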